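(* Let $D=3$, $L>0$, $\omega>0$, and define on $\mathbb R\times[-L/2,L/2]$ the maps $T(\tau,\sigma):=\tau$ and $$Y(\tau,\sigma):=(\sigma\cos\omega\tau,\ \sigma\sin\omega\tau)\in\mathbb R^2 .$$ Then $Y'^2=1$ and $(\dot Y,Y')=0$ identically, $(T,Y)$ satisfies the Euler–Lagrange equations of $L_{ns}$ on $\mathbb R\times(-L/2,L/2)$, and the free-end boundary conditions $$\frac{\partial L_{ns}}{\partial T'}\Big|_{\sigma=\pm L/2}=0,\qquad \frac{\partial L_{ns}}{\partial Y'^i}\Big|_{\sigma=\pm L/2}=0\ \ (i=1,2)$$ hold for all $\tau$ if and only if $L\omega=2\sqrt2$.
   Context: Coordinates are $(\tau,\sigma)$; dot and prime denote $\partial_\tau$, $\partial_\sigma$. For vectors in $\mathbb R^{2}$, $(\cdot,\cdot)$ is the Euclidean scalar product and $V^2=(V,V)$. Units with speed of light $c=1$. Fix a constant $\rho>0$. Define $$A^2:=\dot T^2Y'^2+T'^2\dot Y^2-2\dot TT'(\dot Y,Y'),\qquad N:=\dot Y^2Y'^2-(\dot Y,Y')^2,$$ and the nonrelativistic string Lagrangian density, regarded as a function of $(\dot T,T',\dot Y,Y')$ on the region $A^2>0$: $$L_{ns}:=\rho\Big[\frac{N}{2\sqrt{A^2}}-\sqrt{A^2}\Big].$$ The Euler–Lagrange equations of $L_{ns}$ are $$\partial_\tau\frac{\partial L_{ns}}{\partial\dot T}+\partial_\sigma\frac{\partial L_{ns}}{\partial T'}=0,\qquad \partial_\tau\frac{\partial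 L_{ns}}{\partial\dot Y^i}+\partial_\sigma\frac{\partial L_{ns}}{\partial Y'^i}=0\quad(i=1,2),$$ where the partial derivatives of $L_{ns}$ are evaluated along $(T,Y)$. *)

(* Defs.v *)
From Stdlib Require Import Reals Lra.
From Coquelicot Require Import Coquelicot.
Open Scope R_scope.

Definition dot (v w : R * R) : R := fst v * fst w + snd v * snd w.

Definition A2 (td tp : R) (yd yp : R * R) : R :=
  td ^ 2 * dot yp yp + tp ^ 2 * dot yd yd - 2 * td * tp * dot yd yp.

Definition Nf (yd yp : R * R) : R := dot yd yd * dot yp yp - (dot yd yp) ^ 2.

Definition Lns (rho td tp : R) (yd yp : R * R) : R :=
  rho * (Nf yd yp / (2 * sqrt (A2 td tp yd yp)) - sqrt (A2 td tp yd yp)).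

Definition setc (i : nat) (v : R * R) (x : R) : R * R :=
  if Nat.eqb i 1 then (x, snd v) else (fst v, x).
Definition comp (i : nat) (v : R * R) : R :=
  if Nat.eqb i 1 then fst v else snd v.

Definition dL_dTd rho td tp yd yp := Derive (fun x => Lns rho x tp yd yp) td.
Definition dL_dTp rho td tp yd yp := Derive (fun x => Lns rho td x yd yp) tp.
Definition dL_dYd (i : nat) rho td tp yd yp :=
  Derive (fun x => Lns rho td tp (setc i yd x) yp) (comp i yd).
Definition dL_dYp (i : nat) rho td tp yd yp :=
  Derive (fun x => Lns rho td tp yd (setc i yp x)) (comp i yp).

Definition dtau (F : R -> R -> R) (t s : R) : R := Derive (fun t' => F t' s) t.
Definition dsig (F : R -> R -> R) (t s : R) : R := Derive (fun s' => F t s') s.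
Definition Ydot (Y : R -> R -> R * R) (t s : R) : R * R :=
  (dtau (fun a b => fst (Y a b)) t s, dtau (fun a b => snd (Y a b)) t s).
Definition Yprime (Y : R -> R -> R * R) (t s : R) : R * R :=
  (dsig (fun a b => fst (Y a b)) t s, dsig (fun a b => snd (Y a b)) t s).

Definition PTd rho (T : R -> R -> R) Y t s :=
  dL_dTd rho (dtau T t s) (dsig T t s) (Ydot Y t s) (Yprime Y t s).
Definition PTp rho (T : R -> R -> R) Y t s :=
  dL_dTp rho (dtau T t s) (dsig T t s) (Ydot Y t s) (Yprime Y t s).
Definition PYd i rho (T : R -> R -> R) Y t s :=
  dL_dYd i rho (dtau T t s) (dsig T t s) (Ydot Y t s) (Yprime Y t s).
Definition PYp i rho (T : R -> R -> R) Y t s :=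
  dL_dYp i rho (dtau T t s) (dsig T t s) (Ydot Y t s) (Yprime Y t s).

Definition EL_at rho (T : R -> R -> R) (Y : R -> R -> R * R) (t s : R) : Prop :=
  ex_derive (fun t' => PTd rho T Y t' s) t /\
  ex_derive (fun s' => PTp rho T Y t s') s /\
  Derive (fun t' => PTd rho T Y t' s) t + Derive (fun s' => PTp rho T Y t s') s = 0 /\
  (forall i : nat, (i = 1%nat \/ i = 2%nat) ->
     ex_derive (fun t' => PYd i rho T Y t' s) t /\
     ex_derive (fun s' => PYp i rho T Y t s') s /\
     Derive (fun t' => PYd i rho T Y t' s) t + Derive (fun s' => PYp i rho T Y t s') s = 0).

Definition Tsol (t s : R) : R := t.
Definition Ysol (om : R) (t s : R) : R * R := (s * cos (om * t), s * sin (om * t)).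

(* Main.v *)
Require Import Defs.
From Stdlib Require Import Reals Lra FunctionalExtensionality.
From Coquelicot Require Import Coquelicot.
Open Scope R_scope.
Lemma key rho (g h : R -> R) x g' h' v :
  is_derive g x g' -> is_derive h x h' -> g x = 1 ->
  v = rho*(h'/2 - h x*g'/4 - g'/2) ->
  is_derive (fun y => rho*(h y/(2*sqrt(g y)) - sqrt(g y))) x v.
Proof.
intros Hg Hh H1 ->.
assert (Eg : Derive g x = g') by (apply is_derive_unique; auto).
assert (Eh : Derive h x = h') by (apply is_derive_unique; auto).
auto_derive.
- rewrite H1, sqrt_1. repeat split; try lra; [exists h'|exists g'|exists g']; assumption.
- change (Derive (fun x0 => h x0) x) with (Derive h x).
  change (Derive (fun x0 => g x0) x) with (Derive g x).
  rewrite Eg, Eh, H1, sqrt_1. field.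
Qed.

Section S.
Variables (rho a b c d : R).
Hypothesis H1 : c*c + d*d = 1.
Hypothesis H2 : a*c + b*d = 0.

Lemma vTd : dL_dTd rho 1 0 (a,b) (c,d) = rho*(-(a*a+b*b)/2 - 1).
Proof.
unfold dL_dTd. apply is_derive_unique.
apply (key rho (fun x => A2 x 0 (a,b) (c,d)) (fun _ => Nf (a,b) (c,d)) 1 2 0).
- unfold A2, dot; simpl. auto_derive; trivial; solve [rewrite ?H1, ?H2; ring | nra].
- auto_derive; trivial.
- unfold A2, dot; simpl. nra.
- unfold Nf, dot; simpl. rewrite ?H1, ?H2; field.
Qed.

Lemma vTp : dL_dTp rho 1 0 (a,b) (c,d) = 0.
Proof.
unfold dL_dTp. apply is_derive_unique.
apply (key rho (fun x => A2 1 x (a,b) (c,d)) (fun _ => Nf (a,b) (c,d)) 0 0 0).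
- unfold A2, dot; simpl. auto_derive; trivial; solve [rewrite ?H1, ?H2; ring | nra].
- auto_derive; trivial.
- unfold A2, dot; simpl. nra.
- unfold Nf, dot, setc; simpl; rewrite ?H1, ?H2; field.
Qed.

Lemma vYd1 : dL_dYd 1 rho 1 0 (a,b) (c,d) = rho*a.
Proof.
unfold dL_dYd. simpl comp. apply is_derive_unique.
apply (key rho (fun x => A2 1 0 (setc 1 (a,b) x) (c,d)) (fun x => Nf (setc 1 (a,b) x) (c,d)) a 0 (2*a)).
- unfold A2, dot, setc; simpl. auto_derive; trivial; solve [rewrite ?H1, ?H2; ring | nra].
- unfold Nf, dot, setc; simpl. auto_derive; trivial; solve [rewrite ?H1, ?H2; ring | nra].
- unfold A2, dot, setc; simpl. nra.
- unfold Nf, dot, setc; simpl; rewrite ?H1, ?H2; field.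
Qed.

Lemma vYd2 : dL_dYd 2 rho 1 0 (a,b) (c,d) = rho*b.
Proof.
unfold dL_dYd. simpl comp. apply is_derive_unique.
apply (key rho (fun x => A2 1 0 (setc 2 (a,b) x) (c,d)) (fun x => Nf (setc 2 (a,b) x) (c,d)) b 0 (2*b)).
- unfold A2, dot, setc; simpl. auto_derive; trivial; solve [rewrite ?H1, ?H2; ring | nra].
- unfold Nf, dot, setc; simpl. auto_derive; trivial; solve [rewrite ?H1, ?H2; ring | nra].
- unfold A2, dot, setc; simpl. nra.
- unfold Nf, dot, setc; simpl; rewrite ?H1, ?H2; field.
Qed.

Lemma vYp1 : dL_dYp 1 rho 1 0 (a,b) (c,d) = rho*c*((a*a+b*b)/2 - 1).
Proof.
unfold dL_dYp. simpl comp. apply is_derive_unique.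
apply (key rho (fun x => A2 1 0 (a,b) (setc 1 (c,d) x)) (fun x => Nf (a,b) (setc 1 (c,d) x)) c (2*c) (2*c*(a*a+b*b))).
- unfold A2, dot, setc; simpl. auto_derive; trivial; solve [rewrite ?H1, ?H2; ring | nra].
- unfold Nf, dot, setc; simpl. auto_derive; trivial; solve [rewrite ?H1, ?H2; ring | nra].
- unfold A2, dot, setc; simpl. nra.
- unfold Nf, dot, setc; simpl. rewrite ?H1, ?H2; field.
Qed.

Lemma vYp2 : dL_dYp 2 rho 1 0 (a,b) (c,d) = rho*d*((a*a+b*b)/2 - 1).
Proof.
unfold dL_dYp. simpl comp. apply is_derive_unique.
apply (key rho (fun x => A2 1 0 (a,b) (setc 2 (c,d) x)) (fun x => Nf (a,b) (setc 2 (c,d) x)) d (2*d) (2*d*(a*a+b*b))).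
- unfold A2, dot, setc; simpl. auto_derive; trivial; solve [rewrite ?H1, ?H2; ring | nra].
- unfold Nf, dot, setc; simpl. auto_derive; trivial; solve [rewrite ?H1, ?H2; ring | nra].
- unfold A2, dot, setc; simpl. nra.
- unfold Nf, dot, setc; simpl. rewrite ?H1, ?H2; field.
Qed.
End S.

Section Sol.
Variables (rho om : R).

Lemma dT1 t s : dtau Tsol t s = 1.
Proof. unfold dtau, Tsol. apply is_derive_unique. auto_derive; trivial. Qed.
Lemma dT2 t s : dsig Tsol t s = 0.
Proof. unfold dsig, Tsol. apply is_derive_unique. auto_derive; trivial. Qed.

Lemma Yd t s : Ydot (Ysol om) t s = (-(s*(om*sin(om*t))), s*(om*cos(om*t))).
Proof.
unfold Ydot, dtau, Ysol; simpl. f_equal; apply is_derive_unique; auto_derive; trivial; ring.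
Qed.
Lemma Yp t s : Yprime (Ysol om) t s = (cos(om*t), sin(om*t)).
Proof.
unfold Yprime, dsig, Ysol; simpl. f_equal; apply is_derive_unique; auto_derive; trivial; ring.
Qed.

Lemma cs1 t : cos(om*t)*cos(om*t) + sin(om*t)*sin(om*t) = 1.
Proof. pose proof (sin2_cos2 (om*t)). unfold Rsqr in H. lra. Qed.
Lemma orth t s : (-(s*(om*sin(om*t))))*cos(om*t) + s*(om*cos(om*t))*sin(om*t) = 0.
Proof. ring. Qed.
Lemma nrm t s : (-(s*(om*sin(om*t))))*(-(s*(om*sin(om*t)))) + s*(om*cos(om*t))*(s*(om*cos(om*t)))
  = s*s*om*om.
Proof. pose proof (cs1 t). nra. Qed.

Lemma PTd_v t s : PTd rho Tsol (Ysol om) t s = rho*(-(s*s*om*om)/2 - 1).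
Proof.
unfold PTd. rewrite dT1, dT2, Yd, Yp, vTd by (apply cs1 || apply orth).
rewrite nrm. ring.
Qed.
Lemma PTp_v t s : PTp rho Tsol (Ysol om) t s = 0.
Proof.
unfold PTp. rewrite dT1, dT2, Yd, Yp, vTp by (apply cs1 || apply orth). ring.
Qed.
Lemma PYd1_v t s : PYd 1 rho Tsol (Ysol om) t s = rho*(-(s*(om*sin(om*t)))).
Proof.
unfold PYd. rewrite dT1, dT2, Yd, Yp, vYd1 by (apply cs1 || apply orth). ring.
Qed.
Lemma PYd2_v t s : PYd 2 rho Tsol (Ysol om) t s = rho*(s*(om*cos(om*t))).
Proof.
unfold PYd. rewrite dT1, dT2, Yd, Yp, vYd2 by (apply cs1 || apply orth). ring.
Qed.
Lemma PYp1_v t s : PYp 1 rho Tsol (Ysol om) t s = rho*cos(om*t)*(s*s*om*om/2 - 1).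
Proof.
unfold PYp. rewrite dT1, dT2, Yd, Yp, vYp1 by (apply cs1 || apply orth). rewrite nrm. ring.
Qed.
Lemma PYp2_v t s : PYp 2 rho Tsol (Ysol om) t s = rho*sin(om*t)*(s*s*om*om/2 - 1).
Proof.
unfold PYp. rewrite dT1, dT2, Yd, Yp, vYp2 by (apply cs1 || apply orth). rewrite nrm. ring.
Qed.

Lemma EL_all t s : EL_at rho Tsol (Ysol om) t s.
Proof.
unfold EL_at.
split. { apply (ex_derive_ext (fun t' => rho*(-(s*s*om*om)/2 - 1)));
  [intro; symmetry; apply PTd_v | apply ex_derive_const]. }
split. { apply (ex_derive_ext (fun _ => 0));
  [intro; symmetry; apply PTp_v | apply ex_derive_const]. }
split.
{ rewrite (Derive_ext (fun t' => PTd rho Tsol (Ysol om) t' s) (fun t' => rho*(-(s*s*om*om)/2 - 1))) by (intro; apply PTd_v).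
  rewrite (Derive_ext (fun s' => PTp rho Tsol (Ysol om) t s') (fun _ => 0)) by (intro; apply PTp_v).
  rewrite !Derive_const. ring. }
intros i [-> | ->].
- split. { apply (ex_derive_ext (fun t' => rho*(-(s*(om*sin(om*t'))))));
    [intro; symmetry; apply PYd1_v | auto_derive; trivial]. }
  split. { apply (ex_derive_ext (fun s' => rho*cos(om*t)*(s'*s'*om*om/2 - 1)));
    [intro; symmetry; apply PYp1_v | auto_derive; trivial]. }
  rewrite (Derive_ext (fun t' => PYd 1 rho Tsol (Ysol om) t' s) (fun t' => rho*(-(s*(om*sin(om*t')))))) by (intro; apply PYd1_v).
  rewrite (Derive_ext (fun s' => PYp 1 rho Tsol (Ysol om) t s') (fun s' => rho*cos(om*t)*(s'*s'*om*om/2 - 1))) by (intro; apply PYp1_v).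
  rewrite (is_derive_unique _ t (-(rho*s*om*om*cos(om*t)))) by (auto_derive; trivial; ring).
  rewrite (is_derive_unique _ s (rho*cos(om*t)*s*om*om)) by (auto_derive; trivial; field).
  ring.
- split. { apply (ex_derive_ext (fun t' => rho*(s*(om*cos(om*t')))));
    [intro; symmetry; apply PYd2_v | auto_derive; trivial]. }
  split. { apply (ex_derive_ext (fun s' => rho*sin(om*t)*(s'*s'*om*om/2 - 1)));
    [intro; symmetry; apply PYp2_v | auto_derive; trivial]. }
  rewrite (Derive_ext (fun t' => PYd 2 rho Tsol (Ysol om) t' s) (fun t' => rho*(s*(om*cos(om*t'))))) by (intro; apply PYd2_v).
  rewrite (Derive_ext (fun s' => PYp 2 rho Tsol (Ysol om) t s') (fun s' => rho*sin(om*t)*(s'*s'*om*om/2 - 1))) by (intro; apply PYp2_v).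
  rewrite (is_derive_unique _ t (-(rho*s*om*om*sin(om*t)))) by (auto_derive; trivial; ring).
  rewrite (is_derive_unique _ s (rho*sin(om*t)*s*om*om)) by (auto_derive; trivial; field).
  ring.
Qed.
End Sol.

Theorem mainTheorem7 (rho L om : R) (hrho : 0 < rho) (hL : 0 < L) (hom : 0 < om) :
  (forall t s, -(L/2) <= s <= L/2 ->
     dot (Yprime (Ysol om) t s) (Yprime (Ysol om) t s) = 1 /\
     dot (Ydot (Ysol om) t s) (Yprime (Ysol om) t s) = 0) /\
  (forall t s, -(L/2) < s < L/2 -> EL_at rho Tsol (Ysol om) t s) /\
  ((forall t, forall s, (s = L/2 \/ s = -(L/2)) ->
      PTp rho Tsol (Ysol om) t s = 0 /\
      (forall i : nat, (i = 1%nat \/ i = 2%nat) -> PYp i rho Tsol (Ysol om) t s = 0))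
   <-> L * om = 2 * sqrt 2).
Proof.
pose proof (sqrt_sqrt 2 ltac:(lra)) as Hs2.
pose proof (sqrt_lt_R0 2 ltac:(lra)) as Hs0.
split; [|split].
- intros t s _. rewrite Yd, Yp. unfold dot; simpl. split; [apply cs1|apply orth].
- intros t s _. apply EL_all.
- split.
  + intros H. destruct (H 0 (L/2) (or_introl eq_refl)) as [_ H1].
    specialize (H1 1%nat (or_introl eq_refl)). rewrite PYp1_v in H1.
    rewrite Rmult_0_r, cos_0 in H1.
    assert (HL8 : (L*om)*(L*om) = 8).
    { assert (L/2*(L/2)*om*om/2 - 1 = 0).
      { apply (Rmult_eq_reg_l rho); [|lra]. rewrite Rmult_0_r, <- H1. ring. }
      nra. }
    assert (HLpos : 0 < L*om) by nra.
    nra.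
  + intros H. intros t s Hs. split; [apply PTp_v|].
    assert (HS : s*s*om*om/2 - 1 = 0).
    { assert (s*s = L*L/4) by (destruct Hs as [-> | ->]; field).
      assert ((L*om)*(L*om) = 8) by (rewrite H; nra).
      nra. }
    intros i [-> | ->]; [rewrite PYp1_v | rewrite PYp2_v]; rewrite HS; ring.
Qed.
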